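(* Let $(W,S)$ be the Weyl group and set of simple reflections of a complex semisimple algebraic group. Suppose $\mathbf s=(s_1,\ldots,s_q)$ is a tuple of elements of $S$ with $H_{s_1}\cdots H_{s_q}=H_w$, where $w\in W$ is fully commutative, and suppose $q>l(w)$. Then there exist $i<j$ such that $s_i=s_j$ and $s_i$ commutes with $s_k$ for every $k$ with $i<k<j$.
   Context: The $0$-Hecke algebra has basis $H_u$ ($u\in W$), $H_1$ the identity, and $H_sH_u=H_{su}$ if $l(su)>l(u)$, $H_sH_u=H_u$ if $l(su)<l(u)$ ($s\in S$). An element $w\in W$ is fully commutative if any reduced expression for $w$ can be obtained from any other by using only the relations $st=ts$ for commuting $s,t\in S$. *)

(* Defs.v *)
From mathcomp Require Import all_boot all_fingroup.
Set Implicit Arguments. Unset Strict Implicit. Unset Printing Implicit Defensive.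
Local Open Scope group_scope.

Section Coxeter.
Variable gT : finGroupType.
Variable S : {set gT}.

Definition wprod (u : seq gT) : gT := \prod_(x <- u) x.

Definition Sword (u : seq gT) : bool := all (fun x => x \in S) u.

(* The congruence on words over S generated by the Coxeter relations
   s s = 1 and (s t)^{m(s,t)} = 1, where m(s,t) = #[s * t] is the order of
   s t in the group.  Since all generators are involutions the monoid
   presented this way is the group presented by <S | s^2, (st)^m(s,t)>. *)
Inductive coxcong : seq gT -> seq gT -> Prop :=
| cc_refl u : coxcong u u
| cc_sym u v : coxcong u v -> coxcong v u
| cc_trans u v x : coxcong u v -> coxcong v x -> coxcong u x
| cc_ctx a b u v : coxcong u v -> coxcong (a ++ u ++ b) (a ++ v ++ b)
| cc_sq s : s \in S -> coxcong [:: s; s] [::]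
| cc_braid s t : s \in S -> t \in S ->
    coxcong (flatten (nseq #[s * t] [:: s; t])) [::].

(* (W, S) is a Coxeter system: S consists of involutions generating W and W
   is presented by the Coxeter relations (any two words over S with the same
   product are equal modulo the relations). *)
Definition coxeter_system : Prop :=
  [/\ <<S>> = [set: gT],
      (forall s, s \in S -> #[s] = 2%N) &
      (forall u v, Sword u -> Sword v -> wprod u = wprod v -> coxcong u v)].

(* Weyl group of a complex semisimple algebraic group = finite crystallographic
   Coxeter system: W finite (finGroupType) and m(s,t) in {2,3,4,6} for s <> t. *)
Definition weyl_system : Prop :=
  coxeter_system /\
  (forall s t, s \in S -> t \in S -> s != t -> #[s * t] \in [:: 2; 3; 4; 6]%N).

Definition has_word (w : gT) (n : nat) : bool :=
  [exists t : n.-tuple gT, Sword t && (wprod t == w)].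

(* length function l(w): least n such that w is a product of n elements of S
   (a reduced word has pairwise distinct prefix products, so its length is
   < #|gT|; the search range is thus sufficient when S generates). *)
Definition coxlen (w : gT) : nat := find (has_word w) (iota 0 #|gT|.+1).

(* left multiplication of the basis element H_u by H_s in the 0-Hecke algebra:
   H_s H_u = H_{su} if l(su) > l(u), and H_u otherwise. *)
Definition hmul (s u : gT) : gT :=
  if (coxlen u < coxlen (s * u))%N then s * u else u.

(* H_{s_1} ... H_{s_q} = H_{hecke_prod [:: s_1; ...; s_q]} *)
Definition hecke_prod (u : seq gT) : gT := foldr hmul 1 u.

Definition reduced_word (w : gT) (u : seq gT) : Prop :=
  [/\ Sword u, wprod u = w & size u = coxlen w].

Inductive comm_step : seq gT -> seq gT -> Prop :=
| cs_swap a b s t : s \in S -> t \in S -> s * t = t * s ->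
    comm_step (a ++ [:: s; t] ++ b) (a ++ [:: t; s] ++ b).

Inductive comm_equiv : seq gT -> seq gT -> Prop :=
| ce_refl u : comm_equiv u u
| ce_step u v x : comm_step u v -> comm_equiv v x -> comm_equiv u x.

Definition fully_commutative (w : gT) : Prop :=
  forall u v, reduced_word w u -> reduced_word w v -> comm_equiv u v.

End Coxeter.

(* Main.v *)
Require Import Defs.
From mathcomp Require Import all_boot all_fingroup.
From mathcomp Require Import zify.
Set Implicit Arguments. Unset Strict Implicit. Unset Printing Implicit Defensive.

Section Cox.
Local Open Scope group_scope.
Variables (gT : finGroupType) (S : {set gT}).

Lemma wprod_cat (u v : seq gT) : wprod (u ++ v) = wprod u * wprod v.
Proof. by rewrite /wprod big_cat. Qed.
Lemma wprod_cons (a : gT) v : wprod (a :: v) = a * wprod v.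
Proof. by rewrite /wprod big_cons. Qed.
Lemma wprod_nil : wprod [::] = 1 :> gT.
Proof. by rewrite /wprod big_nil. Qed.

Lemma has_wordP w n :
  reflect (exists v, [/\ Sword S v, size v = n & wprod v = w]) (has_word S w n).
Proof.
apply: (iffP existsP) => [[t /andP [h1 /eqP h2]] | [v [h1 h2 h3]]].
  by exists (val t); rewrite size_tuple.
by subst n; exists (in_tuple v); rewrite /= h1 h3 eqxx.
Qed.

Lemma shorten n : forall v : seq gT, (size v <= n)%N -> Sword S v ->
  exists v', [/\ Sword S v', wprod v' = wprod v, (size v' <= size v)%N
     & (size v' <= #|gT|)%N].
Proof.
elim: n => [|n IH] v hv hS.
  by exists v; split => //; apply: leq_trans hv _.
case: (leqP (size v) #|gT|) => hle; first by exists v.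
pose f := fun k : 'I_(size v).+1 => wprod (take k v).
have : ~~ injectiveb f.
  apply/negP => /injectiveP /leq_card; rewrite card_ord => h; move: hle; rewrite ltnNge; move/negP; apply; apply: leq_trans h; exact: leqnSn.
case/injectivePn => k1 [k2 hne heq].
have [k3 [k4 [hlt heq']]] : exists k3 k4 : 'I_(size v).+1, (k3 < k4)%N /\ f k3 = f k4.
  case: (ltngtP k1 k2) => h.
  - by exists k1, k2.
  - by exists k2, k1.
  - by move: hne; rewrite (val_inj h) eqxx.
have hk4 : (k4 <= size v)%N by rewrite -ltnS.
set v' := take k3 v ++ drop k4 v.
have e1 : wprod v' = wprod v.
  have hv4 : wprod v = wprod (take k4 v) * wprod (drop k4 v) by rewrite -(wprod_cat (take k4 v)) cat_take_drop.
  by rewrite /v' (wprod_cat (take k3 v)) hv4; congr (_ * _); exact: heq'.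
have hs' : (size v' < size v)%N.
  rewrite /v' size_cat size_takel ?size_drop; lia.
have hS' : Sword S v'.
  apply/allP => x; rewrite mem_cat => /orP [/mem_take | /mem_drop] hx; exact: (allP hS).
have [v'' [h1 h2 h3 h4]] := IH v' (ltac:(lia)) hS'.
exists v''; split => //; [by rewrite h2 | lia].
Qed.

Hypothesis hgen : <<S>> = [set: gT].

Lemma exword w : exists v, [/\ Sword S v, wprod v = w & (size v <= #|gT|)%N].
Proof.
have : w \in <<S>> by rewrite hgen inE.
case/gen_prodgP => n [c hc ->].
have hS : Sword S [seq c i | i <- enum 'I_n].
  by apply/allP => x /mapP [i _ ->]; exact: hc.
have [v' [h1 h2 _ h4]] := shorten (leqnn _) hS.
exists v'; split => //; rewrite h2 /wprod big_map enumT unlock //.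
Qed.

Lemma L1 v : Sword S v -> (coxlen S (wprod v) <= size v)%N.
Proof.
move=> hS; have [v' [h1 h2 h3 h4]] := shorten (leqnn _) hS.
apply: leq_trans h3; rewrite leqNgt; apply/negP => /(before_find 0%N).
rewrite nth_iota ?ltnS // add0n => /negbT /negP; apply.
apply/has_wordP; exists v'; split => //.
Qed.

Lemma L2 w : exists v, [/\ Sword S v, wprod v = w & size v = coxlen S w].
Proof.
have [v [h1 h2 h3]] := exword w.
have hh : has (has_word S w) (iota 0 #|gT|.+1).
  apply/hasP; exists (size v); first by rewrite mem_iota /= add0n ltnS.
  by apply/has_wordP; exists v.
have := nth_find 0%N hh; rewrite -/(coxlen S w).
rewrite has_find size_iota in hh.
rewrite nth_iota // add0n => /has_wordP [v' [a b c]]; by exists v'.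
Qed.

Local Notation len := (coxlen S).

Lemma len1 : len 1 = 0%N.
Proof. by have := L1 (v := [::]) isT; rewrite wprod_nil; case: (len 1). Qed.

Lemma lenS a : a \in S -> (len a <= 1)%N.
Proof.
move=> ha; have := L1 (v := [:: a]); rewrite wprod_cons wprod_nil mulg1; apply.
by rewrite /Sword /= ha.
Qed.

Lemma lenM x y : (len (x * y) <= len x + len y)%N.
Proof.
have [p [hp ep sp]] := L2 x; have [q [hq eq sq]] := L2 y.
have := L1 (v := p ++ q); rewrite wprod_cat ep eq size_cat sp sq; apply.
by rewrite /Sword all_cat; apply/andP; split.
Qed.

Lemma split_hecke v : Sword S v ->
  (wprod v = hecke_prod S v /\ len (hecke_prod S v) = size v) \/
  exists v1 a v2, [/\ v = v1 ++ a :: v2, (a \in S /\ Sword S v2),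
     wprod v2 = hecke_prod S v2, len (hecke_prod S v2) = size v2 &
     ~~ (len (hecke_prod S v2) < len (a * hecke_prod S v2))%N].
Proof.
elim: v => [|a v IH] hS.
  by left; rewrite /hecke_prod /= wprod_nil len1.
move/andP: hS => [ha hv]; case: (IH hv) => [[e1 e2] | [v1 [b [v2 [es hb h3 h4 h5]]]]].
- rewrite /hecke_prod /= -/(hecke_prod S v) /hmul; case: ifP => h.
    left; split; first by rewrite wprod_cons e1.
    have := L1 (v := a :: v); rewrite wprod_cons e1 /= => h'.
    have := h' (ltac:(by rewrite /Sword /= ha)); lia.
  right; exists [::], a, v; split => //; by rewrite h.
- right; exists (a :: v1), b, v2; by rewrite es.
Qed.

Lemma dem u v : Sword S v ->
  exists x, foldr (hmul S) u v = x * u /\ len (x * u) = (len x + len u)%N.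
Proof.
elim: v => [|a v IH] /= hS.
  by exists 1; rewrite mul1g len1.
move/andP: hS => [ha hv]; case: (IH hv) => x [e1 e2].
rewrite /hmul e1; case: ifP => h.
  exists (a * x); rewrite mulgA; rewrite mulgA in h.
  have := lenM (a * x) u; have := lenM a x; have := lenS ha.
  have := lenM a (x * u); rewrite mulgA => H1 H2 H3 H4. split => //; set A := len (a * x * u) in H1 H4 h *; set B := len (a * x) in H3 H4 *; set C := len (x*u) in H1 h e2. lia.
by exists x.
Qed.

Hypothesis hpres : forall u v, Sword S u -> Sword S v -> wprod u = wprod v -> coxcong S u v.

Lemma cong_odd u v : coxcong S u v -> odd (size u) = odd (size v).
Proof.
elim => //.
- by move=> ? ? ? _ -> _ ->.
- by move=> a b ? ? _ e; rewrite !size_cat !oddD e.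
- move=> s t _ _; elim: (#[s * t]) => //= m IH.
  by rewrite ?size_cat /= negbK.
Qed.

End Cox.

Section Heap.
Local Open Scope group_scope.
Variables (gT : finGroupType) (S : {set gT}).

Lemma ce_filter A B : comm_equiv S A B -> forall a b : gT, a * b != b * a ->
  filter (fun x => (x == a) || (x == b)) A = filter (fun x => (x == a) || (x == b)) B.
Proof.
elim => // u v x [a0 b0 s t hs ht hst] _ IH a b hab.
rewrite -IH // !filter_cat /=.
case Ps: ((s == a) || (s == b)); case Pt: ((t == a) || (t == b)) => //.
congr (_ ++ _); move: hst.
case/orP: Ps => /eqP ->; case/orP: Pt => /eqP -> // h.
- by rewrite h eqxx in hab.
- by rewrite h eqxx in hab.
Qed.

Lemma ce_count A B : comm_equiv S A B -> forall a : gT, count_mem a A = count_mem a B.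
Proof.
elim => // u v x [a0 b0 s t hs ht hst] _ IH a.
rewrite -IH !count_cat /=; lia.
Qed.

End Heap.

Lemma filter_none (T : Type) (P : pred T) t : all (predC P) t -> filter P t = [::].
Proof. by elim: t => //= y t IH /andP [h1 h2]; rewrite (negbTE h1) IH. Qed.

Lemma cat_injl (T : Type) (p u v : seq T) : p ++ u = p ++ v -> u = v.
Proof. by elim: p => //= y p IH [] /IH. Qed.

Lemma nth_mid (gT : finGroupType) (v1 v2 : seq gT) a m :
  nth 1%g (v1 ++ a :: v2) (size v1 + m.+1) = nth 1%g v2 m.
Proof. by rewrite nth_cat ltnNge leq_addr /= addKn. Qed.

Lemma nth_mid0 (gT : finGroupType) (v1 v2 : seq gT) a :
  nth 1%g (v1 ++ a :: v2) (size v1) = a.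
Proof. by rewrite nth_cat ltnn subnn. Qed.

Theorem proposition3p4 (gT : finGroupType) (S : {set gT})
  (hW : weyl_system S) (w : gT) (s : seq gT)
  (hs : Sword S s) (hH : hecke_prod S s = w)
  (hfc : fully_commutative S w) (hq : (coxlen S w < size s)%N) :
  exists i j : nat, [/\ (i < j < size s)%N,
    nth 1%g s i = nth 1%g s j &
    forall k : nat, (i < k < j)%N ->
      (nth 1%g s i * nth 1%g s k = nth 1%g s k * nth 1%g s i)%g].
Proof.
move: hW => [[hgen hord hpres] _].
have hinv : forall a, a \in S -> (a * a = 1)%g.
  by move=> a ha; have := expg_order a; rewrite (hord a ha) expgS expg1.
case: (split_hecke hs) => [[_ e] | [v1 [a [v2 [es [ha hv2] ew el hn]]]]].
  by move: hq; rewrite -hH e ltnn.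
set u := hecke_prod S v2 in ew el hn.
have hu : hmul S a u = u by rewrite /hmul (negbTE hn).
have hw : w = foldr (hmul S) u v1.
  by rewrite -hH es /hecke_prod foldr_cat /= -/(hecke_prod S v2) -/u hu.
have hv1 : Sword S v1 by move: hs; rewrite es /Sword all_cat => /andP [].
have [x [ex lx]] := dem hgen u hv1.
have [p [hp ep sp]] := L2 hgen x.
have [r [hr er sr]] := L2 hgen (a * u)%g.
have har : wprod (a :: r) = u by rewrite wprod_cons er mulgA hinv // mul1g.
have hSar : Sword S (a :: r) by rewrite /Sword /= ha.
have lau : coxlen S u = (coxlen S (a * u)%g).+1.
  have hpar := cong_odd (hpres _ _ hSar hv2 (etrans har (esym ew))).
  have := L1 hSar; rewrite har /= sr => h1.
  have h2 := hn; rewrite -leqNgt in h2.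
  have : coxlen S u = coxlen S (a * u)%g \/ coxlen S u = (coxlen S (a * u)%g).+1 by lia.
  case => // e; exfalso.
  by move: hpar; rewrite /= sr -el e; case: (odd _).
have hA : reduced_word S w (p ++ v2).
  split; first by rewrite /Sword all_cat; apply/andP; split.
    by rewrite wprod_cat ep ew hw ex.
  by rewrite size_cat sp -el hw ex lx.
have hB : reduced_word S w (p ++ a :: r).
  split; first by rewrite /Sword all_cat; apply/andP; split.
    by rewrite wprod_cat ep har hw ex.
  by rewrite size_cat sp /= sr hw ex lx lau addnS.
have hce := hfc _ _ hA hB.
pose q := fun y : gT => (y == a) || (a * y != y * a)%g.
case: (ltnP (find q v2) (size v2)) => hj.
- have qc : q (nth 1%g v2 (find q v2)) by apply: nth_find; rewrite has_find.
  set c := nth 1%g v2 (find q v2) in qc.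
  case: (eqVneq c a) => eca.
  + exists (size v1), (size v1 + (find q v2).+1)%N; split.
    * rewrite es size_cat /=; lia.
    * by rewrite es nth_mid0 nth_mid -/c eca.
    * move=> k /andP [hk1 hk2].
      have -> : k = (size v1 + (k - size v1 - 1).+1)%N by lia.
      rewrite es nth_mid0 nth_mid.
      have := before_find 1%g (ltac:(lia) : (k - size v1 - 1 < find q v2)%N).
      by rewrite /q => /norP [_ /negbNE /eqP].
  + exfalso.
    have hac : (a * c != c * a)%g.
      by move: qc; rewrite /q (negbTE eca).
    have := ce_filter hce hac; rewrite !filter_cat => /cat_injl.
    rewrite -(cat_take_drop (find q v2) v2) (drop_nth 1%g hj) -/c filter_cat.
    rewrite filter_none; last first.
      apply/allP => y /(nthP 1%g) [i hi <-].
      rewrite size_take hj in hi.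
      rewrite nth_take //=; have := before_find 1%g hi.
      rewrite /q => /norP [h1 /negbNE h2]; rewrite (negbTE h1) /=.
      apply/negP => /eqP hc; move: hac; by rewrite -hc h2.
    by rewrite /= eqxx orbT eqxx /= => -[] /eqP; rewrite (negbTE eca).
- exfalso.
  have hnh : ~~ has q v2 by rewrite has_find -leqNgt.
  have hav : a \notin v2.
    apply/negP => hin; move/negP: hnh; apply; apply/hasP; exists a => //.
    by rewrite /q eqxx.
  have := ce_count hce a; rewrite !count_cat (count_memPn hav) /= eqxx; lia.
Qed.
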